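(* Let $l<u$ be real, let $\Delta Q$ be real with $0<\Delta Q\le u-l$, and let $\epsilon\ge0$, $0\le\delta<1$ with $\frac{e^\epsilon}{1-\delta}>1$ (i.e. $\epsilon$ and $\delta$ not both zero). Let $b_0=\frac{\Delta Q}{\epsilon-\log(1-\delta)}$. Then $1\le \Delta C(b_0)<\frac{e^\epsilon}{1-\delta}$; in particular $\epsilon-\log\Delta C(b_0)-\log(1-\delta)>0$, so $f(b_0)$ is a well-defined positive number, and $f(b_0)\ge b_0$. Moreover $f(b_0)=b_0$ if and only if $\Delta Q=u-l$.
   Context: For $b>0$ and $p\in[l,u]$, $C_p(b)= 1-\frac12\left(e^{-\frac{p-l}{b}}+e^{-\frac{u-p}{b}}\right)$ (the integral $\int_l^u\frac{1}{2b}e^{-|x-p|/b}dx$), and $\Delta C(b)=\frac{C_{l+\Delta Q}(b)}{C_l(b)}$. The map $f$ is defined for $b>0$ with $\epsilon-\log\Delta C(b)-\log(1-\delta)\neq 0$ by $f(b)=\frac{\Delta Q}{\epsilon-\log\Delta C(b)-\log(1-\delta)}$. *)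

(* Defs.v *)
From Stdlib Require Import Reals Lra.
Open Scope R_scope.

(* C_p(b) = 1 - 1/2 (exp(-(p-l)/b) + exp(-(u-p)/b)), the Laplace(p,b) mass of [l,u]. *)
Definition Cp (l u p b : R) : R :=
  1 - / 2 * (exp (- (p - l) / b) + exp (- (u - p) / b)).

Definition DeltaC (l u dQ b : R) : R := Cp l u (l + dQ) b / Cp l u l b.

Definition f_map (l u dQ eps delta b : R) : R :=
  dQ / (eps - ln (DeltaC l u dQ b) - ln (1 - delta)).

(* Main.v *)
Require Import Defs.
From Stdlib Require Import Reals Lra.
Open Scope R_scope.

Lemma key_alg (a c : R) (Ha0 : 0 < a) (Ha1 : a < 1) (Hc0 : 0 < c) (Hca : c <= a) :
  let Dl := (2 - a - c / a) / (1 - c) in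
  1 <= Dl /\ Dl < / a /\ (Dl = 1 <-> c = a).
Proof.
  intro Dl.
  assert (Hc1 : c < 1) by lra.
  assert (E : Dl - 1 = (1 - a) * (a - c) / (a * (1 - c))).
  { unfold Dl; field; lra. }
  assert (E2 : / a - Dl = (1 - a) * (1 - a) / (a * (1 - c))).
  { unfold Dl; field; lra. }
  assert (Hp : 0 < a * (1 - c)) by nra.
  split; [|split].
  - assert (0 <= (1 - a) * (a - c) / (a * (1 - c))).
    { apply Rmult_le_pos; [nra| left; apply Rinv_0_lt_compat; lra]. }
    lra.
  - assert (0 < (1 - a) * (1 - a) / (a * (1 - c))).
    { apply Rmult_lt_0_compat; [nra| apply Rinv_0_lt_compat; lra]. }
    lra.
  - split; intro H.
    + assert (H0 : (1 - a) * (a - c) / (a * (1 - c)) = 0) by lra.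
      unfold Rdiv in H0. apply Rmult_integral in H0. destruct H0 as [H0|H0].
      * apply Rmult_integral in H0; destruct H0; lra.
      * exfalso; assert (0 < / (a * (1 - c))) by (apply Rinv_0_lt_compat; lra). lra.
    + subst c. assert (Dl - 1 = 0) by (rewrite E; field; lra). lra.
Qed.

Theorem lemma4p1 (l u dQ eps delta : R)
  (Hlu : l < u) (HdQ0 : 0 < dQ) (HdQu : dQ <= u - l)
  (Heps : 0 <= eps) (Hd0 : 0 <= delta) (Hd1 : delta < 1)
  (Hne : exp eps / (1 - delta) > 1) :
  let b0 := dQ / (eps - ln (1 - delta)) in
  1 <= DeltaC l u dQ b0 /\ DeltaC l u dQ b0 < exp eps / (1 - delta) /\
  eps - ln (DeltaC l u dQ b0) - ln (1 - delta) > 0 /\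
  0 < f_map l u dQ eps delta b0 /\
  f_map l u dQ eps delta b0 >= b0 /\
  (f_map l u dQ eps delta b0 = b0 <-> dQ = u - l).
Proof.
  intro b0.
  set (L := eps - ln (1 - delta)).
  assert (He : 0 < exp eps) by apply exp_pos.
  assert (Hlt : 1 - delta < exp eps).
  { apply Rmult_lt_reg_r with (/ (1 - delta)).
    apply Rinv_0_lt_compat; lra.
    rewrite Rinv_r by lra. unfold Rdiv in Hne. lra. }
  assert (HL : 0 < L).
  { unfold L. assert (ln (1 - delta) < ln (exp eps)) by (apply ln_increasing; lra).
    rewrite ln_exp in H. lra. }
  assert (Hb0 : 0 < b0) by (unfold b0; fold L; apply Rdiv_lt_0_compat; lra).
  assert (HK : exp eps / (1 - delta) = exp L).
  { unfold L, Rminus. rewrite exp_plus, exp_Ropp, exp_ln by lra. reflexivity. }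
  set (a := exp (- (l + dQ - l) / b0)).
  set (c := exp (- (u - l) / b0)).
  assert (Ha : a = / exp L).
  { unfold a. rewrite <- exp_Ropp. f_equal. unfold b0. fold L. field. lra. }
  assert (HexpL1 : 1 < exp L) by (rewrite <- exp_0; apply exp_increasing; lra).
  assert (Ha0 : 0 < a) by apply exp_pos.
  assert (Ha1 : a < 1).
  { rewrite Ha. rewrite <- Rinv_1. apply Rinv_lt_contravar; lra. }
  assert (Hc0 : 0 < c) by apply exp_pos.
  assert (Hdiv : forall x y, x <= y -> x / b0 <= y / b0).
  { intros x y Hxy. unfold Rdiv. apply Rmult_le_compat_r; [left; apply Rinv_0_lt_compat; lra| lra]. }
  assert (Hca : c <= a).
  { unfold c, a. destruct (Req_dec (u - l) dQ) as [E|E].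
    - right. f_equal. rewrite E. f_equal. ring.
    - left. apply exp_increasing.
      assert (-(u-l) / b0 < - (l + dQ - l) / b0).
      { unfold Rdiv. apply Rmult_lt_compat_r; [apply Rinv_0_lt_compat; lra| lra]. }
      lra. }
  assert (HD : DeltaC l u dQ b0 = (2 - a - c / a) / (1 - c)).
  { unfold DeltaC, Cp.
    replace (- (l - l) / b0) with 0 by (field; lra). rewrite exp_0.
    replace (- (u - (l + dQ)) / b0) with (- (u - l) / b0 + - (- (l + dQ - l) / b0))
      by (field; lra).
    rewrite exp_plus, exp_Ropp. fold a c. field.
    lra. }
  destruct (key_alg a c Ha0 Ha1 Hc0 Hca) as [H1 [H2 H3]].
  rewrite <- HD in H1, H2, H3.
  rewrite Ha, Rinv_inv in H2.
  assert (Hln0 : 0 <= ln (DeltaC l u dQ b0)).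
  { rewrite <- ln_1. destruct H1 as [H1|H1]. left; apply ln_increasing; lra. right; rewrite H1; reflexivity. }
  assert (HlnL : ln (DeltaC l u dQ b0) < L).
  { rewrite <- (ln_exp L). apply ln_increasing; lra. }
  assert (Hden : eps - ln (DeltaC l u dQ b0) - ln (1 - delta) = L - ln (DeltaC l u dQ b0))
    by (unfold L; ring).
  assert (Hf : f_map l u dQ eps delta b0 = dQ / (L - ln (DeltaC l u dQ b0)))
    by (unfold f_map; rewrite Hden; reflexivity).
  assert (Hb0' : b0 = dQ / L) by reflexivity.
  set (Dn := ln (DeltaC l u dQ b0)) in *.
  split; [lra|]. split; [rewrite HK; lra|]. split; [lra|].
  split; [rewrite Hf; apply Rdiv_lt_0_compat; lra|].
  split.
  - rewrite Hf, Hb0'. apply Rle_ge. unfold Rdiv. apply Rmult_le_compat_l; [lra|].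
    apply Rinv_le_contravar; lra.
  - rewrite Hf, Hb0'. split; intro H.
    + assert (Heq : L - Dn = L).
      { apply (f_equal Rinv) in H.
        assert (E1 : / (dQ / (L - Dn)) = (L - Dn) / dQ) by (field; lra).
        assert (E2 : / (dQ / L) = L / dQ) by (field; lra).
        rewrite E1, E2 in H.
        apply (f_equal (fun x => x * dQ)) in H. unfold Rdiv in H.
        rewrite !Rmult_assoc, Rinv_l, !Rmult_1_r in H by lra. exact H. }
      assert (Hl0 : Dn = 0) by lra.
      assert (HD1 : DeltaC l u dQ b0 = 1).
      { rewrite <- (exp_ln (DeltaC l u dQ b0)) by lra. fold Dn. rewrite Hl0. apply exp_0. }
      apply H3 in HD1. unfold c, a in HD1. apply exp_inv in HD1.
      assert (E3 : - (u - l) = - (l + dQ - l)).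
      { apply (f_equal (fun x => x * b0)) in HD1. unfold Rdiv in HD1.
        rewrite !Rmult_assoc, Rinv_l, !Rmult_1_r in HD1 by lra. exact HD1. }
      lra.
    + assert (Hca' : c = a).
      { unfold c, a. f_equal. rewrite H. f_equal. ring. }
      apply H3 in Hca'. unfold Dn. rewrite Hca', ln_1. f_equal. ring.
Qed.
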